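(* Let $y_1, \ldots, y_n \in \mathfrak m$ be a minimal system of generators of $\mathfrak m$, so $R = k[[y_1, \ldots, y_n]]$. Let $d = \max\{a_n + 1, c_R\}$ and let $\widetilde y_i$ be the truncation of $y_i$ at $t^d$, i.e. if $y_i = \sum_{j \ge 0} c_{i,j} t^j$ then $\widetilde y_i = \sum_{j < d} c_{i,j} t^j$. Then $R = k[[\widetilde y_1, \ldots, \widetilde y_n]]$. In particular, $R$ can always be generated (as $k[[\cdot]]$) by finitely many polynomials in $t$.
   Context: Let $k$ be a field and let $(R,\mathfrak m)$ be a complete local noetherian domain of dimension $1$ containing $k$ with $R/\mathfrak m = k$, with normalization $\overline R$ having residue field $k$, so $\overline R = k[[t]]$ and $R \subseteq k[[t]]$ is finite birational. Let $v$ be the $t$-adic valuation. For $A \subseteq k((t))$ let $v(A) = \{v(f): f\in A\setminus\{0\}\}$. The conductor is $\mathfrak C_R = \{x\in\overline R: x\overline R\subseteq R\} = t^{c_R}\overline R$, $c_R$ the conductor degree. The Herzog–Kunz sequence of $R$ is $v(\mathfrak m)\setminus v(\mathfrak m^2)$ listed increasingly as $a_1 < \cdots < a_n$ (with $n = \mathrm{edim}(R)$). For $y_i\in\mathfrak m$, $k[[y_1,\ldots,y_n]]$ is the image of $k[[Y_1,\ldots,Y_n]]\to k[[t]]$, $Y_i\mapsto y_i$. *)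

(* Defs.v *)
(* Formal power series k[[t]] over a field k are modelled as
   coefficient functions nat -> k; subrings of k[[t]] as predicates. *)
From mathcomp Require Import all_boot all_order all_algebra.
Set Implicit Arguments. Unset Strict Implicit. Unset Printing Implicit Defensive.
Import GRing.Theory.
Local Open Scope ring_scope.

Section PS.
Variable k : fieldType.

Definition ps := nat -> k.

Definition pseq (f g : ps) : Prop := forall j, f j = g j.
Definition psnz (f : ps) : Prop := exists j, f j != 0.
Definition psadd (f g : ps) : ps := fun j => f j + g j.
Definition psopp (f : ps) : ps := fun j => - f j.
Definition psmul (f g : ps) : ps := fun j => \sum_(i < j.+1) f i * g (j - i)%N.
Definition pscst (c : k) : ps := fun j => if j == 0%N then c else 0.
Definition pspow (f : ps) (e : nat) : ps := iter e (psmul f) (pscst 1).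

Definition has_val (f : ps) (b : nat) : Prop :=
  f b != 0 /\ forall j, (j < b)%N -> f j = 0.
Definition vset (A : ps -> Prop) (b : nat) : Prop := exists f, A f /\ has_val f b.

Definition is_ksubalg (R : ps -> Prop) : Prop :=
  [/\ forall c, R (pscst c),
      forall f g, R f -> R g -> R (psadd f g),
      forall f, R f -> R (psopp f),
      forall f g, R f -> R g -> R (psmul f g)
    & forall f g, pseq f g -> R f -> R g].

Definition finite_over (R : ps -> Prop) : Prop :=
  exists (m : nat) (g : 'I_m -> ps), forall f : ps,
    exists r : 'I_m -> ps, (forall i, R (r i)) /\
      pseq f (fun j => \sum_(i < m) psmul (r i) (g i) j).

(* k[[t]] is contained in the fraction field of R (R -> k[[t]] birational) *)
Definition birational (R : ps -> Prop) : Prop :=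
  forall f : ps, exists a b, [/\ R a, R b, psnz b & pseq (psmul b f) a].

Definition fin_birat_subalg (R : ps -> Prop) : Prop :=
  [/\ is_ksubalg R, finite_over R & birational R].

Definition maxid (R : ps -> Prop) (f : ps) : Prop := R f /\ f 0%N = 0.

Definition maxid2 (R : ps -> Prop) (f : ps) : Prop :=
  exists (N : nat) (x z : 'I_N -> ps),
    (forall l, maxid R (x l)) /\ (forall l, maxid R (z l)) /\
    pseq f (fun j => \sum_(l < N) psmul (x l) (z l) j).

Definition ideal_gen (R : ps -> Prop) (n : nat) (P : pred 'I_n)
    (y : 'I_n -> ps) (f : ps) : Prop :=
  exists r : 'I_n -> ps, (forall i, R (r i)) /\
    pseq f (fun j => \sum_(i < n | P i) psmul (r i) (y i) j).

Definition min_gens (R : ps -> Prop) (n : nat) (y : 'I_n -> ps) : Prop :=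
  [/\ forall i, maxid R (y i),
      forall f, maxid R f <-> ideal_gen R predT y f
    & forall i0 : 'I_n, ~ (forall f, maxid R f <-> ideal_gen R (predC1 i0) y f)].

Definition conductor (R : ps -> Prop) (x : ps) : Prop :=
  forall g, R (psmul x g).

Definition conductor_degree (R : ps -> Prop) (c : nat) : Prop :=
  forall x, conductor R x <-> (forall j, (j < c)%N -> x j = 0).

Definition HK (R : ps -> Prop) (b : nat) : Prop :=
  vset (maxid R) b /\ ~ vset (maxid2 R) b.

Definition HK_last (R : ps -> Prop) (a : nat) : Prop :=
  HK R a /\ forall b, HK R b -> (b <= a)%N.

Definition psmonom (n : nat) (y : 'I_n -> ps) (al : {ffun 'I_n -> nat}) : ps :=
  \big[psmul/pscst 1]_(i < n) pspow (y i) (al i).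

(* F(y_1,...,y_n) for F in k[[Y_1..Y_n]] (coefficients F al), y_i in t k[[t]]:
   the coefficient of t^j only involves monomials of total degree <= j. *)
Definition pssubst (n : nat) (F : {ffun 'I_n -> nat} -> k) (y : 'I_n -> ps) : ps :=
  fun j => \sum_(al : {ffun 'I_n -> 'I_j.+1} | (\sum_(i < n) (al i : nat) <= j)%N)
             F [ffun i => (al i : nat)] * psmonom y [ffun i => (al i : nat)] j.

Definition in_kser (n : nat) (y : 'I_n -> ps) (f : ps) : Prop :=
  exists F : {ffun 'I_n -> nat} -> k, pseq f (pssubst F y).

Definition trunc (d : nat) (f : ps) : ps := fun j => if (j < d)%N then f j else 0.

Definition is_poly (f : ps) : Prop := exists D, forall j, (D <= j)%N -> f j = 0.

End PS.

(* Main.v *)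
Require Import Defs.
From HB Require Import structures.
From mathcomp Require Import all_boot all_order all_algebra.
From mathcomp Require Import boolp zify.
From Stdlib Require Import Classical.
Set Implicit Arguments. Unset Strict Implicit. Unset Printing Implicit Defensive.
Import GRing.Theory.
Local Open Scope ring_scope.

Section Basic.
Variable k : fieldType.
Implicit Types f g h : ps k.

Definition tp (N : nat) (f : ps k) : {poly k} := \poly_(i < N) f i.

Lemma coefM_ext (p p' q q' : {poly k}) j :
  (forall i, (i <= j)%N -> p`_i = p'`_i) -> (forall i, (i <= j)%N -> q`_i = q'`_i) ->
  (p*q)`_j = (p'*q')`_j.
Proof.
move=> Hp Hq; rewrite !coefM; apply: eq_bigr => i _.
by rewrite Hp ?Hq // ?leq_subr // -ltnS.
Qed.

Lemma psmul_tp f g N j : (j < N)%N -> psmul f g j = (tp N f * tp N g)`_j.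
Proof.
move=> jN; rewrite coefM /psmul; apply: eq_bigr => i _.
rewrite !coef_poly (leq_ltn_trans _ jN) ?(leq_ltn_trans (leq_subr _ _) jN) //.
by rewrite -ltnS.
Qed.

Lemma psmulE f g j : psmul f g j = (tp j.+1 f * tp j.+1 g)`_j.
Proof. exact: (psmul_tp f g (ltnSn j)). Qed.

Lemma tp_mul f g N j : (j < N)%N -> (tp N (psmul f g))`_j = (tp N f * tp N g)`_j.
Proof. by move=> jN; rewrite coef_poly jN (psmul_tp _ _ jN). Qed.

Lemma psmulA : associative (@psmul k).
Proof.
move=> f g h; apply: functional_extensionality_dep => j.
rewrite psmulE (psmulE (psmul f g)).
rewrite (@coefM_ext _ (tp j.+1 f) _ (tp j.+1 g * tp j.+1 h)) //; last first.
  by move=> i ij; rewrite tp_mul.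
rewrite (@coefM_ext (tp j.+1 (psmul f g)) (tp j.+1 f * tp j.+1 g) (tp j.+1 h) (tp j.+1 h)) //; last first.
  by move=> i ij; rewrite tp_mul.
by rewrite mulrA.
Qed.

Lemma psmulC : commutative (@psmul k).
Proof.
move=> f g; apply: functional_extensionality_dep => j.
by rewrite !psmulE mulrC.
Qed.

Lemma psmul1 : left_id (pscst 1) (@psmul k).
Proof.
move=> f; apply: functional_extensionality_dep => j.
rewrite psmulE (@coefM_ext _ 1 _ (tp j.+1 f)) ?mul1r //.
  by rewrite coef_poly ltnSn.
by move=> i ij; rewrite coef_poly coef1 /pscst ltnS ij; case: (i == 0%N).
Qed.

Lemma psmulDl : left_distributive (@psmul k) (@psadd k).
Proof.
move=> f g h; apply: functional_extensionality_dep => j.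
rewrite /psadd !psmulE -coefD -mulrDl.
apply: coefM_ext => // i ij; by rewrite coefD !coef_poly ltnS ij.
Qed.

Definition ps0 : ps k := fun _ => 0.

Lemma psaddA : associative (@psadd k).
Proof. by move=> f g h; apply: functional_extensionality_dep => j; rewrite /psadd addrA. Qed.
Lemma psaddC : commutative (@psadd k).
Proof. by move=> f g; apply: functional_extensionality_dep => j; rewrite /psadd addrC. Qed.
Lemma psadd0 : left_id ps0 (@psadd k).
Proof. by move=> f; apply: functional_extensionality_dep => j; rewrite /psadd add0r. Qed.
Lemma psaddN : left_inverse ps0 (@psopp k) (@psadd k).
Proof. by move=> f; apply: functional_extensionality_dep => j; rewrite /psadd /psopp addNr. Qed.
Lemma ps10 : pscst 1 != ps0.
Proof.
apply/eqP => /(congr1 (fun f => f 0%N)); rewrite /pscst /ps0 /=; exact/eqP/oner_neq0.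
Qed.
End Basic.

Definition PS (k : fieldType) : Type := ps k.
HB.instance Definition _ (k : fieldType) := Choice.copy (PS k) (nat -> k).
HB.instance Definition _ (k : fieldType) := GRing.isZmodule.Build (PS k)
  (@psaddA k) (@psaddC k) (@psadd0 k) (@psaddN k).
HB.instance Definition _ (k : fieldType) := GRing.Zmodule_isComNzRing.Build (PS k)
  (@psmulA k) (@psmulC k) (@psmul1 k) (@psmulDl k) (@ps10 k).

Section Series.
Variable k : fieldType.
Implicit Types f g h : PS k.

Definition van (N : nat) (f : PS k) := forall j, (j < N)%N -> f j = 0.
Definition cs (c : k) : PS k := pscst c.
Definition tpow (m : nat) : PS k := fun j => if j == m then 1 else 0.

Lemma psE0 j : (0 : PS k) j = 0. Proof. by []. Qed.
Lemma psED f g j : (f + g) j = f j + g j. Proof. by []. Qed.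
Lemma psEN f j : (- f) j = - f j. Proof. by []. Qed.
Lemma psEB f g j : (f - g) j = f j - g j. Proof. by []. Qed.
Lemma psE_sum (I : Type) (r : seq I) (P : pred I) (F : I -> PS k) j :
  (\sum_(i <- r | P i) F i) j = \sum_(i <- r | P i) F i j.
Proof. by elim/big_rec2: _ => // i a b _ <-. Qed.
Lemma psE1 j : (1 : PS k) j = (j == 0)%:R.
Proof. by rewrite [LHS]/(pscst 1 j) /pscst; case: (j == 0%N). Qed.
Lemma psEM f g j : (f * g) j = \sum_(i < j.+1) f i * g (j - i)%N.
Proof. by []. Qed.
Lemma psEM0 f g : (f * g) 0%N = f 0%N * g 0%N.
Proof. by rewrite psEM big_ord1. Qed.
Lemma psEcsM c f j : (cs c * f) j = c * f j.
Proof.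
rewrite psEM big_ord_recl /= subn0 big1 ?addr0 // => i _.
by rewrite /cs /pscst /= mul0r.
Qed.
Lemma psEcs c j : cs c j = if j == 0%N then c else 0. Proof. by []. Qed.
Lemma cs0 : cs 0 = 0.
Proof. by apply: functional_extensionality_dep => j; rewrite psEcs; case: ifP. Qed.
Lemma cs1 : cs 1 = 1. Proof. by []. Qed.
Lemma csD a b : cs (a + b) = cs a + cs b.
Proof. by apply: functional_extensionality_dep => j; rewrite psED !psEcs; case: ifP; rewrite ?addr0. Qed.
Lemma csM a b : cs (a * b) = cs a * cs b.
Proof. by apply: functional_extensionality_dep => j; rewrite psEcsM !psEcs; case: ifP; rewrite ?mulr0. Qed.

Lemma psEM_ext f f' g g' j :
  (forall i, (i <= j)%N -> f i = f' i) -> (forall i, (i <= j)%N -> g i = g' i) ->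
  (f * g) j = (f' * g') j.
Proof.
move=> Hf Hg; rewrite !psEM; apply: eq_bigr => i _.
have ij : (i <= j)%N by rewrite -ltnS ltn_ord.
by rewrite Hf // Hg // leq_subr.
Qed.

Lemma van_mul a b f g : van a f -> van b g -> van (a + b) (f * g).
Proof.
move=> Hf Hg j jab; rewrite psEM big1 // => i _.
case: (ltnP i a) => ia; first by rewrite Hf ?mul0r.
rewrite Hg ?mulr0 //.
have ij : (i <= j)%N by rewrite -ltnS.
lia.
Qed.

Lemma van_le a b f : (b <= a)%N -> van a f -> van b f.
Proof. by move=> ba Hf j jb; apply: Hf (leq_trans jb ba). Qed.

Lemma van0 f : van 0 f. Proof. by []. Qed.
Lemma van_zero N : van N 0. Proof. by []. Qed.
Lemma vanD N f g : van N f -> van N g -> van N (f + g).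
Proof. by move=> Hf Hg j jN; rewrite psED Hf ?Hg ?addr0. Qed.
Lemma vanN N f : van N f -> van N (- f).
Proof. by move=> Hf j jN; rewrite psEN Hf ?oppr0. Qed.
Lemma vanB N f g : van N f -> van N g -> van N (f - g).
Proof. by move=> Hf Hg; apply: vanD => //; apply: vanN. Qed.
Lemma van_sum N (I : Type) (r : seq I) (P : pred I) (F : I -> PS k) :
  (forall i, P i -> van N (F i)) -> van N (\sum_(i <- r | P i) F i).
Proof. by move=> H; elim/big_ind: _ => //; exact: vanD. Qed.
Lemma van_mull N f g : van N g -> van N (f * g).
Proof. by move=> Hg; rewrite -[N]add0n; apply: van_mul. Qed.
Lemma van_mulr N f g : van N f -> van N (f * g).
Proof. by move=> Hf; rewrite -[N]addn0; apply: van_mul. Qed.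
Lemma van_exp f e : van 1 f -> van e (f ^+ e).
Proof.
move=> Hf; elim: e => [|e IH]; first exact: van0.
by rewrite exprS -add1n; apply: van_mul.
Qed.
Lemma van_prod (I : Type) (r : seq I) (F : I -> PS k) (a : I -> nat) :
  (forall i, van (a i) (F i)) -> van (\sum_(i <- r) a i) (\prod_(i <- r) F i).
Proof.
move=> H; elim: r => [|x r IH]; first by rewrite !big_nil.
by rewrite !big_cons; apply: van_mul.
Qed.

Lemma tpowM m h j : (tpow m * h) j = if (m <= j)%N then h (j - m)%N else 0.
Proof.
rewrite psEM; case: ifP => mj.
  rewrite (bigD1 (Ordinal (mj : (m < j.+1)%N))) //= /tpow eqxx mul1r big1 ?addr0 //.
  by move=> i /eqP ine; rewrite ifN ?mul0r //; apply/eqP => ie; apply: ine; apply: val_inj.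
rewrite big1 // => i _; rewrite /tpow ifN ?mul0r //.
by apply/eqP => im; move: mj; rewrite -im -ltnS ltn_ord.
Qed.

Lemma tpow_shift m g : van m g -> g = tpow m * (fun j => g (j + m)%N).
Proof.
move=> Hg; apply: functional_extensionality_dep => j; rewrite tpowM.
case: ifP => mj; first by rewrite subnK.
by rewrite Hg // ltnNge mj.
Qed.
Lemma van_tpow m : van m (tpow m).
Proof. by move=> j jm; rewrite /tpow ifN // neq_ltn jm. Qed.

Lemma pspowE f e : pspow f e = f ^+ e.
Proof. by elim: e => [|e IH] //; rewrite exprS -IH. Qed.
Lemma psmonomE n (y : 'I_n -> PS k) al : psmonom y al = \prod_(i < n) y i ^+ al i.
Proof. by rewrite /psmonom; apply: eq_bigr => i _; rewrite pspowE. Qed.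
End Series.

Section Sub.
Variable k : fieldType.
Variable R : PS k -> Prop.
Hypothesis HR : is_ksubalg R.

Lemma Rcs c : R (cs c). Proof. by case: HR => H _ _ _ _; apply: H. Qed.
Lemma RD f g : R f -> R g -> R (f + g). Proof. by case: HR => _ H _ _ _; apply: H. Qed.
Lemma RN f : R f -> R (- f). Proof. by case: HR => _ _ H _ _; apply: H. Qed.
Lemma RM f g : R f -> R g -> R (f * g). Proof. by case: HR => _ _ _ H _; apply: H. Qed.
Lemma R0 : R 0. Proof. by rewrite -cs0; apply: Rcs. Qed.
Lemma R1 : R 1. Proof. exact: (Rcs 1). Qed.
Lemma RB f g : R f -> R g -> R (f - g). Proof. by move=> ? ?; apply: RD => //; apply: RN. Qed.
Lemma RX f e : R f -> R (f ^+ e).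
Proof. by move=> Rf; elim: e => [|e IH]; [exact: R1 | rewrite exprS; apply: RM]. Qed.
Lemma Rsum (I : Type) (r : seq I) (P : pred I) (F : I -> PS k) :
  (forall i, P i -> R (F i)) -> R (\sum_(i <- r | P i) F i).
Proof. by move=> H; elim/big_ind: _ => //; [exact: R0 | exact: RD]. Qed.
Lemma Rprod (I : Type) (r : seq I) (P : pred I) (F : I -> PS k) :
  (forall i, P i -> R (F i)) -> R (\prod_(i <- r | P i) F i).
Proof. by move=> H; elim/big_ind: _ => //; [exact: R1 | exact: RM]. Qed.
Lemma Rpseq f g : pseq f g -> R f -> R g. Proof. by case: HR => _ _ _ _ H; apply: H. Qed.

Lemma Rdet m (A : 'M[PS k]_m) : (forall i j, R (A i j)) -> R (\det A).
Proof.
move=> H; apply: Rsum => s _; apply: RM; first by apply: RX; apply: RN; apply: R1.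
by apply: Rprod.
Qed.
Lemma Radj m (A : 'M[PS k]_m) : (forall i j, R (A i j)) -> forall i j, R (\adj A i j).
Proof.
move=> H i j; rewrite /adjugate mxE expand_cofactor.
apply: Rsum => s _; apply: RM; first by apply: RX; apply: RN; apply: R1.
by apply: Rprod.
Qed.

Variable c : nat.
Hypothesis Hc : conductor_degree R c.

Lemma R_van f : van c f -> R f.
Proof.
move=> Hf; have := (proj2 (Hc f) Hf (pscst 1)).
by have -> : psmul f (pscst 1) = f by exact: (mulr1 f).
Qed.

Lemma geo_stab (x : PS k) j m : van 1 x ->
  (\sum_(i < j.+1 + m) x ^+ i) j = (\sum_(i < j.+1) x ^+ i) j.
Proof.
move=> Hx; elim: m => [|m IH]; first by rewrite addn0.
rewrite addnS big_ord_recr /= psED IH van_exp ?addr0 //.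
by rewrite ltnS leq_addr.
Qed.

Lemma R_inv u : R u -> u 0%N = 1 -> exists w, R w /\ u * w = 1.
Proof.
move=> Ru u0.
set x := 1 - u.
have Hx : van 1 x by move=> j; rewrite ltnS leqn0 => /eqP ->; rewrite /x psEB psE1 u0 subrr.
pose P K := \sum_(i < K) x ^+ i.
have stab : forall j K, (j < K)%N -> P K j = P j.+1 j.
  by move=> j K jK; rewrite /P -(subnKC jK) geo_stab.
pose w : PS k := fun j => P j.+1 j.
have RP K : R (P K) by apply: Rsum => i _; apply: RX; apply: RB => //; exact: R1.
exists w; split.
  have -> : w = (w - P c) + P c by rewrite subrK.
  apply: RD => //; apply: R_van => j jc.
  by rewrite psEB /w -(stab j c jc) subrr.
apply: functional_extensionality_dep => j.
rewrite (@psEM_ext _ u u w (P j.+1)) //; last first.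
  by move=> i ij; rewrite /w stab.
have -> : u * P j.+1 = 1 - x ^+ j.+1.
  have -> : u = 1 - x by rewrite /x opprB addrC subrK.
  by apply/esym; rewrite /P -opprB subrX1 -mulNr opprB.
by rewrite psEB (van_exp (e := j.+1) Hx) ?subr0.
Qed.
End Sub.

Definition ev0 (k : fieldType) (f : PS k) : k := f 0%N.
Lemma ev0_zmod (k : fieldType) : zmod_morphism (@ev0 k).
Proof. by move=> f g; rewrite /ev0 psEB. Qed.
Lemma ev0_monoid (k : fieldType) : monoid_morphism (@ev0 k).
Proof. by split; [rewrite /ev0 psE1 | move=> f g; rewrite /ev0 psEM0]. Qed.
HB.instance Definition _ (k : fieldType) := GRing.isZmodMorphism.Build _ _ (@ev0 k) (@ev0_zmod k).
HB.instance Definition _ (k : fieldType) := GRing.isMonoidMorphism.Build _ _ (@ev0 k) (@ev0_monoid k).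

Section Main1.
Variable k : fieldType.
Variable R : PS k -> Prop.
Variable n : nat.
Variable y : 'I_n -> PS k.
Variables c a : nat.
Hypothesis HR : is_ksubalg R.
Hypothesis Hmin : min_gens R y.
Hypothesis Hc : conductor_degree R c.
Hypothesis Ha : HK_last R a.
Implicit Types f g h q : PS k.

Let d := maxn a.+1 c.
Let yt i : PS k := trunc d (y i).

Lemma my i : R (y i) /\ y i 0%N = 0.
Proof. by case: Hmin => H _ _; case: (H i). Qed.

Lemma gen f : maxid R f -> exists r : 'I_n -> PS k, (forall i, R (r i)) /\ f = \sum_i r i * y i.
Proof.
case: Hmin => _ H _ /(H f) [r [Rr Hf]]; exists r; split => //.
apply: functional_extensionality_dep => j; rewrite Hf psE_sum.
by apply: eq_bigr.
Qed.

Lemma maxidM f g : R f -> maxid R g -> maxid R (f * g).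
Proof. by move=> Rf [Rg g0]; split; [apply: RM | rewrite psEM0 g0 mulr0]. Qed.

Definition inJ (g : PS k) := exists s : 'I_n -> PS k, (forall i, maxid R (s i)) /\ g = \sum_i s i * y i.

Lemma J0 : inJ 0.
Proof. exists (fun _ => 0); split; last by rewrite big1 // => i _; rewrite mul0r. by move=> i; split; [apply: R0|]. Qed.

Lemma JD f g : inJ f -> inJ g -> inJ (f + g).
Proof.
move=> [s [Hs ->]] [s' [Hs' ->]]; exists (fun i => s i + s' i); split.
  move=> i; case: (Hs i) => R1 e1; case: (Hs' i) => R2 e2.
  by split; [apply: RD | rewrite psED e1 e2 addr0].
by rewrite -big_split /=; apply: eq_bigr => i _; rewrite mulrDl.
Qed.

Lemma JZ e g : inJ g -> inJ (cs e * g).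
Proof.
move=> [s [Hs ->]]; exists (fun i => cs e * s i); split.
  by move=> i; apply: maxidM => //; apply: Rcs.
by rewrite mulr_sumr; apply: eq_bigr => i _; rewrite mulrA.
Qed.

Lemma JM f g : maxid R f -> maxid R g -> inJ (f * g).
Proof.
move=> mf /gen [r [Rr ->]]; exists (fun i => f * r i); split.
  by move=> i; rewrite mulrC; apply: maxidM.
by rewrite mulr_sumr; apply: eq_bigr => i _; rewrite mulrA.
Qed.

Lemma J_maxid2 q : maxid2 R q -> inJ q.
Proof.
move=> [N [x [z [Hx [Hz Hq]]]]].
have -> : q = \sum_(l < N) ((x l : PS k) * z l).
  by apply: functional_extensionality_dep => j; rewrite Hq psE_sum.
by elim/big_ind: _ => //; [exact: J0 | exact: JD | move=> l _; apply: JM].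
Qed.

Let c1 := maxn c 1.

Lemma van_R f : van c f -> R f. Proof. exact: (R_van Hc). Qed.

Lemma J_big g : van (c1 + c1) g -> inJ g.
Proof.
move=> Hg.
have Hg' : van c1 (fun j => g (j + c1)%N).
  by move=> j jc; apply: Hg; rewrite ltn_add2r.
have m' : maxid R (fun j => g (j + c1)%N).
  split; first by apply: van_R; apply: van_le Hg'; rewrite /c1 leq_maxl.
  by apply: Hg'; rewrite /c1 leq_maxr.
have [r [Rr Hr]] := gen m'.
rewrite (tpow_shift (van_le (leq_addr _ _) Hg)) Hr.
exists (fun i => tpow k c1 * r i); split; last first.
  by rewrite mulr_sumr; apply: eq_bigr => i _; rewrite mulrA.
move=> i; split.
  have := proj2 (Hc (tpow k c1)) _ (r i); apply.
  by apply: van_le (@van_tpow k c1); rewrite /c1 leq_maxl.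
rewrite psEM0 /tpow ifN ?mul0r //; rewrite /c1; apply/eqP => h.
by have := leq_maxr c 1; rewrite -h.
Qed.

Lemma d_ge1 : (1 <= d)%N. Proof. by rewrite /d leq_max ltnS leq0n. Qed.
Lemma d_gec : (c <= d)%N. Proof. by rewrite /d leq_maxr. Qed.
Lemma d_gea : (a < d)%N. Proof. by rewrite /d leq_maxl. Qed.

Lemma J_down K g : van (maxn d (c1 + c1 - K)) g -> inJ g.
Proof.
elim: K g => [|K IH] g Hg.
  by apply: J_big; apply: van_le Hg; rewrite subn0 leq_maxr.
set N0 := maxn d (c1 + c1 - K.+1) in Hg.
case: (ltnP N0 (maxn d (c1 + c1 - K))) => h; last by apply: IH; apply: van_le Hg.
have N0d : (d <= N0)%N by rewrite /N0 leq_maxl.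
have eN : maxn d (c1 + c1 - K) = N0.+1 by move: h; rewrite /N0; lia.
case: (eqVneq (g N0) 0) => gN.
  apply: IH; rewrite eN => j; rewrite ltnS leq_eqVlt => /orP [/eqP -> //|]; exact: Hg.
have mg : maxid R g.
  split; first by apply: van_R; apply: van_le Hg; apply: leq_trans d_gec N0d.
  by apply: Hg; apply: leq_trans d_ge1 N0d.
have vg : vset (maxid R) N0 by exists g.
have nHK : ~ HK R N0.
  by case: Ha => _ Hl /Hl; have := leq_trans d_gea N0d; lia.
have : vset (maxid2 R) N0 by apply: NNPP => nv; apply: nHK.
move=> [q [mq [qN qv]]].
set e := g N0 / q N0.
have -> : g = (g - cs e * q) + cs e * q by rewrite subrK.
apply: JD; last by apply: JZ; apply: J_maxid2.
apply: IH; rewrite eN => j; rewrite ltnS leq_eqVlt => /orP [/eqP ->|jN].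
  by rewrite psEB psEcsM /e divfK // subrr.
by rewrite psEB psEcsM Hg // qv // mulr0 subr0.
Qed.

Lemma J_van g : van d g -> inJ g.
Proof.
move=> Hg; apply: (@J_down (c1 + c1)); rewrite subnn.
by have -> : maxn d 0 = d by rewrite maxn0.
Qed.

Lemma Ryt i : R (yt i).
Proof.
have -> : yt i = y i - (y i - yt i) by rewrite opprB addrC subrK.
apply: RB => //; first by case: (my i).
apply: van_R => j jc; rewrite psEB /yt /trunc.
by rewrite (leq_trans jc d_gec) subrr.
Qed.

Lemma yt0 i : yt i 0%N = 0.
Proof. by rewrite /yt /trunc d_ge1; case: (my i). Qed.

Lemma van_yt i : van d (y i - yt i).
Proof. by move=> j jd; rewrite psEB /yt /trunc jd subrr. Qed.

Lemma y_in_yt i : exists b : 'I_n -> PS k, (forall l, R (b l)) /\ y i = \sum_l b l * yt l.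
Proof.
have hS : forall i, exists s : 'I_n -> PS k,
    (forall l, maxid R (s l)) /\ y i - yt i = \sum_l s l * y l.
  by move=> i'; apply: J_van; apply: van_yt.
have [S HS] := choice hS.
pose A : 'M[PS k]_n := \matrix_(i, l) ((i == l)%:R - S i l).
have HA i' : \sum_l A i' l * y l = yt i'.
  rewrite (eq_bigr (fun l => (i' == l)%:R * y l - S i' l * y l)); last first.
    by move=> l _; rewrite mxE mulrBl.
  rewrite sumrB (bigD1 i') //= eqxx mul1r big1 ?addr0; last first.
    by move=> l /negbTE; rewrite eq_sym => ->; rewrite mul0r.
  by rewrite -(proj2 (HS i')) opprB addrC subrK.
have RA : forall i' l, R (A i' l).
  have Rn : forall m : nat, R (m%:R : PS k).
    by elim=> [|m IH]; [exact: (R0 HR) | rewrite mulrS; apply: (RD HR) => //; exact: (R1 HR)].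
  move=> i' l; rewrite mxE; apply: (RB HR); first exact: Rn.
  by case: (proj1 (HS i') l).
have det0 : (\det A) 0%N = 1.
  have -> : (\det A) 0%N = ev0 (\det A) by [].
  rewrite -det_map_mx.
  have -> : map_mx (@ev0 k) A = 1%:M.
    apply/matrixP => i' l; rewrite !mxE rmorphB rmorph_nat /=.
    by rewrite /ev0 (proj2 (proj1 (HS i') l)) subr0; case: (i' == l).
  by rewrite det1.
have [w [Rw Hw]] := R_inv HR Hc (Rdet HR RA) det0.
exists (fun l => w * \adj A i l); split.
  by move=> l; apply: RM => //; apply: Radj.
have E : \det A * y i = \sum_l \adj A i l * yt l.
  have E1 : \sum_l ((\det A)%:M i l * y l) = \det A * y i.
    rewrite (bigD1 i) //= mxE eqxx mulr1n big1 ?addr0 // => l /negbTE.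
    by rewrite mxE eq_sym => ->; rewrite mulr0n mul0r.
  rewrite -E1 -mul_adj_mx.
  under eq_bigr => l _ do rewrite mxE mulr_suml.
  rewrite exchange_big /=; apply: eq_bigr => l _.
  by rewrite -HA mulr_sumr; apply: eq_bigr => m _; rewrite mulrA.
have -> : y i = w * (\det A * y i) by rewrite mulrA (mulrC w) Hw mul1r.
by rewrite E mulr_sumr; apply: eq_bigr => l _; rewrite mulrA.
Qed.

Lemma gen_t f : maxid R f -> exists r : 'I_n -> PS k, (forall i, R (r i)) /\ f = \sum_i r i * yt i.
Proof.
move=> /gen [r [Rr ->]].
have [B HB] := choice y_in_yt.
exists (fun l => \sum_i r i * B i l); split.
  by move=> l; apply: (Rsum HR) => i _; apply: (RM HR) => //; case: (HB i).
under eq_bigr => i _ do rewrite (proj2 (HB i)) mulr_sumr.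
rewrite exchange_big /=; apply: eq_bigr => l _.
by rewrite mulr_suml; apply: eq_bigr => i _; rewrite mulrA.
Qed.
End Main1.


Section Subst.
Variable k : fieldType.
Variable n : nat.
Variable z : 'I_n -> PS k.
Hypothesis Hz : forall i, van 1 (z i).

Definition mi := {ffun 'I_n -> nat}.
Definition conv B (al : {ffun 'I_n -> 'I_B}) : mi := [ffun i => (al i : nat)].
Definition deg (al : mi) : nat := \sum_i al i.
Definition mon (al : mi) : PS k := \prod_i z i ^+ al i.

Lemma van_mon al : van (deg al) (mon al).
Proof. by apply: van_prod => i; apply: van_exp. Qed.

Lemma comp_le_deg (al : mi) i : (al i <= deg al)%N.
Proof. by rewrite /deg (bigD1 i) //= leq_addr. Qed.

Definition PB B (F : mi -> k) : PS k :=
  \sum_(al : {ffun 'I_n -> 'I_B} | (deg (conv al) < B)%N) cs (F (conv al)) * mon (conv al).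

Lemma ffun_narrow (R' : nmodType) B D (phi : mi -> R') : (D < B)%N ->
  \sum_(al : {ffun 'I_n -> 'I_B} | (deg (conv al) <= D)%N) phi (conv al) =
  \sum_(al : {ffun 'I_n -> 'I_D.+1} | (deg (conv al) <= D)%N) phi (conv al).
Proof.
move=> DB.
pose h (be : {ffun 'I_n -> 'I_D.+1}) : {ffun 'I_n -> 'I_B} := [ffun i => widen_ord DB (be i)].
pose h' (al : {ffun 'I_n -> 'I_B}) : {ffun 'I_n -> 'I_D.+1} := [ffun i => inord (al i)].
have convh be : conv (h be) = conv be.
  by apply/ffunP => i; rewrite !ffunE.
rewrite (reindex_onto h h').
  apply: eq_big => be; last by move=> _; rewrite convh.
  rewrite convh; case: (deg (conv be) <= D)%N => //=.
  apply/eqP/ffunP => i; rewrite !ffunE; apply: val_inj => /=.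
  by rewrite inordK.
move=> al Hal; apply/ffunP => i; rewrite !ffunE; apply: val_inj => /=.
have ai : (al i <= D)%N.
  by apply: leq_trans Hal; have := comp_le_deg (conv al) i; rewrite ffunE.
by rewrite inordK // ltnS.
Qed.

Lemma pssubst_PB F B j : (j < B)%N -> pssubst F z j = PB B F j.
Proof.
move=> jB.
rewrite /PB psE_sum.
under eq_bigr => al _ do rewrite psEcsM.
rewrite big_mkcond /=.
rewrite (eq_bigr (fun al : {ffun 'I_n -> 'I_B} => if (deg (conv al) <= j)%N then F (conv al) * mon (conv al) j else 0)); last first.
  move=> al _; case: ifP => h1; case: ifP => h2 //.
    by rewrite van_mon ?mulr0 // ltnNge h2.
  by move: h1; rewrite (leq_ltn_trans h2 jB).
rewrite -big_mkcond /= (@ffun_narrow _ B j (fun be => F be * mon be j) jB).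
rewrite /pssubst; apply: eq_big => al.
  by rewrite /deg; under eq_bigr => i _ do rewrite ffunE.
by move=> _; rewrite /mon psmonomE.
Qed.

Definition toF (p : seq (k * mi)) (be : mi) : k := \sum_(x <- p) (if x.2 == be then x.1 else 0).
Definition eval (p : seq (k * mi)) : PS k := \sum_(x <- p) cs x.1 * mon x.2.

Lemma cs_sum (I : Type) (r : seq I) (P : pred I) (F : I -> k) :
  cs (\sum_(i <- r | P i) F i) = \sum_(i <- r | P i) cs (F i).
Proof. by apply: (big_morph (@cs k)); [exact: csD | exact: cs0]. Qed.

Lemma PB_delta B (x : k * mi) : (deg x.2 < B)%N ->
  PB B (fun be => if x.2 == be then x.1 else 0) = cs x.1 * mon x.2.
Proof.
move=> dB; rewrite /PB.
have xi i : (x.2 i < B)%N by apply: leq_ltn_trans dB; apply: comp_le_deg.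
pose al0 : {ffun 'I_n -> 'I_B} := [ffun i => Ordinal (xi i)].
have c0 : conv al0 = x.2 by apply/ffunP => i; rewrite !ffunE.
rewrite (bigD1 al0) /=; last by rewrite c0.
rewrite c0 eqxx big1 ?addr0 // => al /andP [_ ne].
rewrite ifN ?cs0 ?mul0r //; apply: contra ne => /eqP e.
apply/eqP/ffunP => i; apply: val_inj; move/ffunP: e => /(_ i).
by rewrite !ffunE /= => ->.
Qed.

Lemma PB_toF B p : (all (fun x => deg x.2 < B)%N p) -> PB B (toF p) = eval p.
Proof.
move=> /allP Hp; rewrite /PB /toF.
under eq_bigr => al _ do rewrite cs_sum mulr_suml.
rewrite exchange_big /eval big_seq [RHS]big_seq; apply: eq_bigr => x xp.
have := PB_delta (Hp x xp); rewrite /PB => <-.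
by [].
Qed.

Lemma eval_cat p q : eval (p ++ q) = eval p + eval q.
Proof. by rewrite /eval big_cat. Qed.
Lemma eval_nil : eval [::] = 0.
Proof. by rewrite /eval big_nil. Qed.
Lemma toF_cat p q be : toF (p ++ q) be = toF p be + toF q be.
Proof. by rewrite /toF big_cat. Qed.

Definition shift (i : 'I_n) (al : mi) : mi := [ffun l => al l + (l == i)%N].
Definition shiftx i (x : k * mi) := (x.1, shift i x.2).

Lemma deg_shift i al : deg (shift i al) = (deg al).+1.
Proof.
rewrite /deg; under eq_bigr => l _ do rewrite ffunE.
rewrite big_split /=.
have -> : (\sum_(l < n) (l == i) = 1)%N.
  by rewrite (bigD1 i) //= eqxx big1 // => l /negbTE ->.
by rewrite addn1.
Qed.

Lemma mon_shift i al : mon (shift i al) = z i * mon al.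
Proof.
rewrite /mon; under eq_bigr => l _ do rewrite ffunE exprD.
rewrite big_split /= mulrC; congr (_ * _).
rewrite (bigD1 i) //= eqxx expr1 big1 ?mulr1 // => l /negbTE ->.
by rewrite expr0.
Qed.

Lemma eval_shift i p : eval (map (shiftx i) p) = z i * eval p.
Proof.
rewrite /eval big_map mulr_sumr; apply: eq_bigr => x _.
by rewrite /shiftx /= mon_shift mulrCA.
Qed.

Variable R : PS k -> Prop.
Hypothesis HR : is_ksubalg R.
Variable c : nat.
Hypothesis Hc : conductor_degree R c.
Hypothesis Rz : forall i, R (z i).

Lemma R_mon al : R (mon al).
Proof. by apply: (Rprod HR) => i _; apply: (RX HR). Qed.

Lemma R_pssubst F : R (pssubst F z).
Proof.
have RP : R (PB c F).
  by apply: (Rsum HR) => al _; apply: (RM HR); [apply: (Rcs HR) | apply: R_mon].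
have -> : pssubst F z = ((pssubst F z : PS k) - PB c F) + PB c F by rewrite subrK.
apply: (RD HR) => //; apply: (R_van Hc) => j jc.
by rewrite psEB (pssubst_PB _ jc) subrr.
Qed.
End Subst.


Fixpoint Iid (k : fieldType) (R : PS k -> Prop) (n : nat) (z : 'I_n -> PS k) (e : nat) (h : PS k) : Prop :=
  if e is e'.+1 then exists r : 'I_n -> PS k, (forall i, Iid R z e' (r i)) /\ h = \sum_i r i * z i
  else R h.

Section Main2.
Variable k : fieldType.
Variable R : PS k -> Prop.
Variable n : nat.
Variable y : 'I_n -> PS k.
Variables c a : nat.
Hypothesis HR : is_ksubalg R.
Hypothesis Hmin : min_gens R y.
Hypothesis Hc : conductor_degree R c.
Hypothesis Ha : HK_last R a.
Implicit Types f g h q : PS k.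

Let zt i : PS k := trunc (maxn a.+1 c) (y i).
Let I := Iid R zt.

Lemma Rzt i : R (zt i). Proof. exact: (Ryt a HR Hmin Hc). Qed.
Lemma van_zt i : van 1 (zt i).
Proof. by move=> j; rewrite ltnS leqn0 => /eqP ->; apply: (yt0 c a Hmin). Qed.

Lemma I_R e h : I e h -> R h.
Proof.
elim: e h => [|e IH] h; first by move=> H; exact: H.
move=> [r [Hr ->]].
apply: (Rsum HR) => i _; apply: (RM HR); [apply: IH; apply: Hr | apply: Rzt].
Qed.

Lemma I_van e h : I e h -> van e h.
Proof.
elim: e h => [|e IH] h; first by move=> _; apply: van0.
move=> [r [Hr ->]]; apply: van_sum => i _.
by rewrite -addn1; apply: van_mul; [apply: IH; apply: Hr | apply: van_zt].
Qed.

Lemma I_B e f g : I e f -> I e g -> I e (f - g).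
Proof.
elim: e f g => [|e IH] f g; first exact: (RB HR).
move=> [r [Hr ->]] [r' [Hr' ->]]; exists (fun i => r i - r' i); split.
  by move=> i; apply: IH; [apply: Hr | apply: Hr'].
by rewrite -sumrB; apply: eq_bigr => i _; rewrite mulrBl.
Qed.

Lemma LT e h : I e h -> exists p : seq (k * mi n),
  all (fun x => deg x.2 == e) p /\ I e.+1 (h - eval zt p).
Proof.
elim: e h => [|e IH] h.
  move=> Rh; exists [:: (h 0%N, [ffun=> 0%N])]; split.
    by rewrite /= andbT /deg; apply/eqP; apply: big1 => i _; rewrite ffunE.
  have mh : maxid R (h - eval zt [:: (h 0%N, [ffun=> 0%N])]).
    split; first by apply: (RB HR) => //; apply: (Rsum HR) => x _; apply: (RM HR); [apply: (Rcs HR) | apply: (R_mon HR) => i; apply: Rzt].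
    rewrite psEB /eval big_cons big_nil addr0 psEcsM /mon.
    rewrite (eq_bigr (fun _ => 1)); last by move=> i _; rewrite ffunE expr0.
    by rewrite prodr_const expr1n psE1 mulr1 subrr.
  have [r [Rr Hr]] := gen_t HR Hmin Hc Ha mh.
  by exists r; split => // i; exact: Rr.
move=> [r [Hr ->]].
have Hp : forall i, exists p : seq (k * mi n),
    all (fun x => deg x.2 == e) p /\ I e.+1 (r i - eval zt p).
  by move=> i; apply: IH; apply: Hr.
have [P HP] := choice Hp.
exists (\big[cat/[::]]_(i < n) map (shiftx i) (P i)); split.
  elim/big_ind: _ => //; first by move=> s1 s2; rewrite all_cat => -> ->.
  move=> i _; rewrite all_map; apply/allP => x xP /=.
  by rewrite deg_shift eqSS; move/allP: (proj1 (HP i)) => /(_ x xP).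
have -> : eval zt (\big[cat/[::]]_(i < n) map (shiftx i) (P i)) =
    \sum_(i < n) zt i * eval zt (P i).
  rewrite (big_morph (eval zt) (eval_cat zt) (eval_nil zt)).
  by apply: eq_bigr => i _; rewrite eval_shift.
exists (fun i => r i - eval zt (P i)); split; first by move=> i; case: (HP i).
by rewrite -sumrB; apply: eq_bigr => i _; rewrite mulrBl [zt i * _]mulrC.
Qed.

Lemma R_in_S f : R f -> in_kser zt f.
Proof.
move=> Rf.
have step : forall eh : nat * PS k, exists p : seq (k * mi n), I eh.1 eh.2 ->
    all (fun x => deg x.2 == eh.1) p /\ I eh.1.+1 (eh.2 - eval zt p).
  move=> [e h]; case: (classic (I e h)) => H.
    by have [p Hp] := LT H; exists p.
  by exists [::].
have [st Hst] := choice step.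
pose hs := fix hs e := if e is e'.+1 then hs e' - eval zt (st (e', hs e')) else f.
pose P e := st (e, hs e).
have Ihs : forall e, I e (hs e).
  elim=> [|e IH]; first exact: Rf.
  exact: (proj2 (Hst (e, hs e) IH)).
have degP e : all (fun x => deg x.2 == e) (P e) by exact: (proj1 (Hst (e, hs e) (Ihs e))).
have hsE : forall E, hs E = f - \sum_(e < E) eval zt (P e).
  elim=> [|E IH]; first by rewrite big_ord0 subr0.
  have -> : hs E.+1 = hs E - eval zt (P E) by [].
  by rewrite IH big_ord_recr /= opprD addrA.
pose F (be : mi n) := toF (P (deg be)) be.
exists F => j.
rewrite (pssubst_PB van_zt F (ltnSn j)).
pose Q := \big[cat/[::]]_(e < j.+1) P e.
have toFQ be : (deg be < j.+1)%N -> F be = toF Q be.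
  move=> db; rewrite /Q (big_morph (fun s => toF s be) (fun s1 s2 => toF_cat s1 s2 be) (big_nil _ _ _ _)).
  rewrite (bigD1 (Ordinal db)) //= big1 ?addr0 // => e /eqP ne.
  apply: big1_seq => x /andP [_ xP].
  case: eqP => // xe; exfalso; apply: ne; apply: val_inj => /=.
  by move/allP: (degP e) => /(_ x xP) /eqP <-; rewrite xe.
have -> : PB zt j.+1 F = PB zt j.+1 (toF Q).
  by apply: eq_bigr => al Hal; rewrite toFQ.
rewrite PB_toF; last first.
  rewrite /Q; elim/big_ind: _ => //; first by move=> s1 s2; rewrite all_cat => -> ->.
  move=> e _; apply/allP => x xP; move/allP: (degP e) => /(_ x xP) /eqP ->.
  exact: ltn_ord.
rewrite /Q (big_morph (eval zt) (eval_cat zt) (eval_nil zt)).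
have := I_van (Ihs j.+1) (ltnSn j); rewrite hsE psEB => /eqP.
by rewrite subr_eq0 => /eqP.
Qed.
End Main2.

Local Close Scope ring_scope.
Unset Implicit Arguments.

Theorem mainTheorem15 (k : fieldType) (R : ps k -> Prop) (n : nat)
    (y : 'I_n -> ps k) (c a : nat) :
  fin_birat_subalg R ->
  min_gens R y ->
  conductor_degree R c ->
  HK_last R a ->
  (forall f, R f <-> in_kser (fun i => trunc (maxn a.+1 c) (y i)) f) /\
  (exists (m : nat) (p : 'I_m -> ps k),
      (forall i, is_poly (p i) /\ p i 0%N = 0%R) /\
      (forall f, R f <-> in_kser p f)).
Proof.
move=> [HR _ _] Hmin Hc Ha.
have Hz : forall i, van 1 (trunc (maxn a.+1 c) (y i) : PS k).
  by move=> i j; rewrite ltnS leqn0 => /eqP ->; apply: (yt0 c a Hmin).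
have key : forall f, R f <-> in_kser (fun i => trunc (maxn a.+1 c) (y i)) f.
  move=> f; split; first exact: (R_in_S HR Hmin Hc Ha).
  move=> [F HF]; apply: (Rpseq HR (f := pssubst F (fun i => trunc (maxn a.+1 c) (y i)))).
    by move=> j; rewrite HF.
  apply: (R_pssubst Hz HR Hc) => i; exact: (Ryt a HR Hmin Hc).
split => //; exists n, (fun i => trunc (maxn a.+1 c) (y i)); split => //.
move=> i; split; last exact: (yt0 c a Hmin).
by exists (maxn a.+1 c) => j; rewrite /trunc ltnNge => ->.
Qed.
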